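(* Let $(\mathcal I,T)$ be of class $\mathcal{DR}$, let $\mu$ be an admissible probability measure with density $\phi$, and fix a real $s>0$. Then the following identity holds in the ring of formal power series in $v,t$: $$\sum_{w\in\{0,1\}^\star}v^{|w|}\,t^{n(w)}\,p_\mu(w)^s=\sum_{n\ge0}v^n\,q(n)^s\sum_{k\ge0}t^k\,\mathbb G_{v,s}^k\big[S[\phi]^s\big](0,q(n)).$$ (For fixed powers of $v$ and $t$, the coefficient on the right-hand side is a finite sum.)
   Context: Let $\mathcal I=[0,1]$. A binary dynamical system is given by $c\in]0,1[$ and two $C^2$ bijections, $a:[0,1]\to[0,c]$ and $b:[0,1]\to[c,1]$. The map $T$ equals $a^{-1}$ on $]0,c[$ and $b^{-1}$ on $]c,1[$. Class $\mathcal{DR}$: $a$ is increasing, $b$ is decreasing, $a(0)=0$, $a(1)=c$, $b(0)=1$, $b(1)=c$, $a'>0$ and $b'<0$ on $[0,1]$, and $a'(x)<1$, $b'(x)>-1$ for $x\in]0,1]$. Coding: $h_0=a$, $h_1=b$; for $w=w_1\cdots w_k$, $h_w=h_{w_1}\circ\cdots\circ h_{w_k}$ and $\mathcal I_w=h_w(\mathcal I)$. Here $\{0,1\}^\star$ is the set of finite words (including the empty word $\varepsilon$, with $h_\varepsilon=\mathrm{id}$), $|w|$ is the length of $w$, and $n(w)$ is its number of ones. A probability $\mu$ is admissible if it has a strictly positive density $\phi\in C^1([0,1])$. Set $p_\mu(w)=\mu(\mathcal I_w)$. Let $q(n)=a^n(1)$, and $g_m=a^{m-1}\circ b$ for $m\ge1$.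 For a function $F$ on $[0,1]^2$ and $x\neq y$, define $$\mathbb G_{v,s}[F](x,y)=\sum_{m\ge1}v^m\Big|\frac{g_m(x)-g_m(y)}{x-y}\Big|^sF(g_m(x),g_m(y)),$$ with the diagonal value obtained by replacing the difference quotient by $|g_m'(x)|$. $S[\phi]$ is the function on $[0,1]^2$ defined by $$S[\phi](x,y)=\frac{1}{y-x}\int_x^y\phi(t)\,dt\quad(x\neq y),\qquad S[\phi](x,x)=\phi(x).$$ *)

(* Defs.v *)
From Stdlib Require Import Reals List.
From Coquelicot Require Import Coquelicot.
Open Scope R_scope.

Definition in01 (x : R) : Prop := 0 <= x <= 1.

Definition deriv_on01 (f f' : R -> R) : Prop :=
  forall x, in01 x ->
    filterlim (fun y => (f y - f x) / (y - x))
      (within (fun y => in01 y /\ y <> x) (locally x)) (locally (f' x)).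

Definition cont_on01 (f : R -> R) : Prop :=
  forall x, in01 x -> filterlim f (within in01 (locally x)) (locally (f x)).

Definition rpow (x s : R) : R :=
  if Req_EM_T x 0 then 0 else Rpower x s.

(** Coding maps: h_0 = a, h_1 = b (true = letter 1),
    h_w = h_{w1} o ... o h_{wk}. *)
Definition hletter (a b : R -> R) (c : bool) : R -> R := if c then b else a.
Definition hword (a b : R -> R) (w : list bool) (x : R) : R :=
  fold_right (fun c acc => hletter a b c acc) x w.

Definition nones (w : list bool) : nat := count_occ Bool.bool_dec w true.

Fixpoint words (n : nat) : list (list bool) :=
  match n with
  | O => nil :: nil
  | S n => map (cons false) (words n) ++ map (cons true) (words n)
  end.

(** p_mu(w) = mu(I_w) where mu has density phi and I_w = h_w([0,1]) is the
    (closed) interval with endpoints h_w(0), h_w(1). *)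
Definition p_mu (a b phi : R -> R) (w : list bool) : R :=
  Rabs (RInt phi (hword a b w 0) (hword a b w 1)).

Definition q (a : R -> R) (n : nat) : R := Nat.iter n a 1.

Definition g (a b : R -> R) (m : nat) (x : R) : R := Nat.iter (m - 1) a (b x).

(** g_m'(x) by the chain rule: (prod_{j=0}^{m-2} a'(a^j(b x))) * b'(x). *)
Fixpoint prod_deriv_a (a a1 : R -> R) (k : nat) (y : R) : R :=
  match k with
  | O => 1
  | S k => a1 (Nat.iter k a y) * prod_deriv_a a a1 k y
  end.
Definition g_deriv (a a1 b b1 : R -> R) (m : nat) (x : R) : R :=
  prod_deriv_a a a1 (m - 1) (b x) * b1 x.

Definition dq (a a1 b b1 : R -> R) (m : nat) (x y : R) : R :=
  if Req_EM_T x y then Rabs (g_deriv a a1 b b1 m x)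
  else Rabs ((g a b m x - g a b m y) / (x - y)).

Definition ser := nat -> R.

(** The operator G_{v,s} acting on functions F : [0,1]^2 -> R[[v]]:
    coefficient of v^N in G[F](x,y) is
    sum_{1<=m<=N} |dq_m(x,y)|^s * [v^(N-m)] F(g_m x, g_m y). *)
Definition Gop (a a1 b b1 : R -> R) (s : R) (F : R -> R -> ser) : R -> R -> ser :=
  fun x y N =>
    sum_f_R0 (fun m => if Nat.eqb m 0 then 0
                      else rpow (dq a a1 b b1 m x y) s * F (g a b m x) (g a b m y) (N - m)%nat)
             N.

Definition Sphi (phi : R -> R) (x y : R) : R :=
  if Req_EM_T x y then phi x else / (y - x) * RInt phi x y.

Definition const_ser (F : R -> R -> R) : R -> R -> ser :=
  fun x y N => match N with O => F x y | S _ => 0 end.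

(** Coefficient of v^N t^K on the left-hand side. *)
Definition lhs_coef (a b phi : R -> R) (s : R) (N K : nat) : R :=
  fold_right Rplus 0
    (map (fun w => if Nat.eqb (nones w) K then rpow (p_mu a b phi w) s else 0)
         (words N)).

(** Coefficient of v^N t^K on the right-hand side:
    sum_{n=0}^N q(n)^s [v^(N-n)] G^K[S[phi]^s](0, q(n)). *)
Definition rhs_coef (a a1 b b1 phi : R -> R) (s : R) (N K : nat) : R :=
  sum_f_R0 (fun n =>
    rpow (q a n) s *
    Nat.iter K (Gop a a1 b b1 s)
      (const_ser (fun x y => rpow (Sphi phi x y) s)) 0 (q a n) (N - n)%nat) N.

(* Main.v *)
Require Import Defs.
From Stdlib Require Import Reals List Lra Lia.
From Coquelicot Require Import Coquelicot.
Open Scope R_scope.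

Definition sumW (N : nat) (f : list bool -> R) : R :=
  fold_right Rplus 0 (map f (words N)).

Lemma sumFR_app (l1 l2 : list R) :
  fold_right Rplus 0 (l1 ++ l2) = fold_right Rplus 0 l1 + fold_right Rplus 0 l2.
Proof. induction l1; simpl; [lra|]. rewrite IHl1; lra. Qed.

Lemma sumW_S N f :
  sumW (S N) f = sumW N (fun w => f (false :: w)) + sumW N (fun w => f (true :: w)).
Proof.
  unfold sumW; simpl. rewrite map_app, sumFR_app, !map_map. reflexivity.
Qed.

Lemma sumW_ext N f g : (forall w, f w = g w) -> sumW N f = sumW N g.
Proof. intros H; unfold sumW. f_equal. apply map_ext. auto. Qed.

Lemma sumW_0f N : sumW N (fun _ => 0) = 0.
Proof.
  induction N; [unfold sumW; simpl; lra|]. rewrite sumW_S, IHN. lra.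
Qed.

Lemma sumW_snoc N : forall f,
  sumW (S N) f = sumW N (fun w => f (w ++ false :: nil)) + sumW N (fun w => f (w ++ true :: nil)).
Proof.
  induction N; intros f.
  - rewrite sumW_S. unfold sumW; simpl. lra.
  - rewrite sumW_S, (IHN (fun w => f (false :: w))), (IHN (fun w => f (true :: w))).
    rewrite (sumW_S N (fun w => f (w ++ false :: nil))), (sumW_S N (fun w => f (w ++ true :: nil))).
    simpl. lra.
Qed.

Lemma rpow_0 s : rpow 0 s = 0.
Proof. unfold rpow. destruct (Req_EM_T 0 0); [reflexivity|congruence]. Qed.

Lemma rpow_mult u v s : 0 <= u -> 0 <= v -> rpow (u * v) s = rpow u s * rpow v s.
Proof.
  intros Hu Hv.
  destruct (Req_EM_T u 0) as [->|Hu0]. { rewrite Rmult_0_l, rpow_0; lra. }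
  destruct (Req_EM_T v 0) as [->|Hv0]. { rewrite Rmult_0_r, rpow_0; lra. }
  unfold rpow.
  destruct (Req_EM_T (u*v) 0) as [E|_].
  { apply Rmult_integral in E; tauto. }
  destruct (Req_EM_T u 0); [tauto|]. destruct (Req_EM_T v 0); [tauto|].
  rewrite Rpower_mult_distr; [reflexivity|lra|lra].
Qed.

Lemma rpow_dq a a1 b b1 s m x y :
  rpow (Rabs (y - x)) s * rpow (dq a a1 b b1 m x y) s
  = rpow (Rabs (g a b m y - g a b m x)) s.
Proof.
  unfold dq. destruct (Req_EM_T x y) as [<-|Hxy].
  - rewrite !Rminus_diag, Rabs_R0, !rpow_0. lra.
  - rewrite <- rpow_mult by apply Rabs_pos.
    rewrite <- Rabs_mult. f_equal. f_equal. field.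
    intro H; apply Hxy; lra.
Qed.

Section Main.
Variables (a a1 b b1 phi : R -> R) (s : R).

Definition Phi (x y : R) (u : list bool) : R :=
  rpow (Rabs (hword a b u y - hword a b u x)) s *
  rpow (Sphi phi (hword a b u x) (hword a b u y)) s.

Definition BB x y M K := sumW M (fun u => if Nat.eqb (nones u) K then Phi x y u else 0).

Definition F0 := const_ser (fun x y => rpow (Sphi phi x y) s).

Definition CC x y M K := rpow (Rabs (y - x)) s * Nat.iter K (Gop a a1 b b1 s) F0 x y M.

Definition DD x y M K := sum_f_R0 (fun n => CC (Nat.iter n a x) (Nat.iter n a y) (M - n) K) M.

Lemma hword_snoc u c x : hword a b (u ++ c :: nil) x = hword a b u (hletter a b c x).
Proof. unfold hword. rewrite fold_right_app. reflexivity. Qed.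

Lemma nones_snoc u c : nones (u ++ c :: nil) = (nones u + if c then 1 else 0)%nat.
Proof. unfold nones. rewrite count_occ_app. destruct c; reflexivity. Qed.

Lemma BB_S x y M K : BB x y (S M) K =
  BB (a x) (a y) M K + match K with O => 0 | S K' => BB (b x) (b y) M K' end.
Proof.
  unfold BB. rewrite sumW_snoc. f_equal.
  - apply sumW_ext; intro w. rewrite nones_snoc, Nat.add_0_r.
    unfold Phi. rewrite !hword_snoc. reflexivity.
  - destruct K.
    + transitivity (sumW M (fun _ => 0)); [|apply sumW_0f]. apply sumW_ext; intro w. rewrite nones_snoc.
      rewrite Nat.add_1_r. reflexivity.
    + apply sumW_ext; intro w. rewrite nones_snoc, Nat.add_1_r. simpl.
      unfold Phi. rewrite !hword_snoc. reflexivity.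
Qed.

Lemma iter_succ_r {A} (f : A -> A) n x : Nat.iter (S n) f x = Nat.iter n f (f x).
Proof. induction n; simpl; [reflexivity|]. simpl in IHn. rewrite IHn. reflexivity. Qed.

Lemma DD_S x y M K : DD x y (S M) K = CC x y (S M) K + DD (a x) (a y) M K.
Proof.
  unfold DD. rewrite decomp_sum by lia. simpl pred. f_equal.
  apply sum_eq. intros i Hi. rewrite iter_succ_r, (iter_succ_r _ _ y). reflexivity.
Qed.

Lemma CC_S x y M K : CC x y (S M) K =
  match K with O => 0 | S K' => DD (b x) (b y) M K' end.
Proof.
  destruct K as [|K].
  - unfold CC. simpl. unfold F0, const_ser. lra.
  - unfold CC. change (Nat.iter (S K) (Gop a a1 b b1 s) F0 x y (S M)) with (Gop a a1 b b1 s (Nat.iter K (Gop a a1 b b1 s) F0) x y (S M)). unfold Gop at 1; cbv beta. rewrite decomp_sum by lia. simpl pred.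
    simpl (Nat.eqb 0 0). rewrite Rplus_0_l. rewrite scal_sum. unfold DD.
    apply sum_eq. intros i Hi. simpl (Nat.eqb (S i) 0). cbv iota.
    rewrite (Rmult_comm _ (rpow (Rabs (y - x)) s)), <- Rmult_assoc, rpow_dq.
    unfold g. replace (S i - 1)%nat with i by lia. reflexivity.
Qed.

Lemma BB_DD M : forall x y K, BB x y M K = DD x y M K.
Proof.
  induction M; intros x y K.
  - unfold BB, DD, sumW. simpl. unfold CC. destruct K.
    + simpl. unfold Phi, F0, const_ser. simpl. lra.
    + simpl. unfold Gop. simpl. ring.
  - rewrite BB_S, DD_S, CC_S. destruct K; rewrite !IHM; lra.
Qed.

End Main.

Lemma ballR x e y : ball x e y <-> Rabs (y - x) < e.
Proof. unfold ball; simpl; unfold AbsRing_ball, abs, minus, plus, opp; simpl. tauto. Qed.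

Lemma deriv_cont f f' : deriv_on01 f f' -> forall x, in01 x -> forall eps, 0 < eps ->
  exists d, 0 < d /\ forall y, in01 y -> Rabs (y - x) < d -> Rabs (f y - f x) < eps.
Proof.
  intros H x Hx eps He.
  specialize (H x Hx). apply filterlim_locally with (eps := mkposreal 1 Rlt_0_1) in H.
  destruct H as [[d1 Hd1] H]. simpl in H.
  set (Mx := Rabs (f' x) + 1).
  assert (HM : 0 < Mx) by (unfold Mx; pose proof (Rabs_pos (f' x)); lra).
  exists (Rmin d1 (eps / Mx)). split.
  { apply Rmin_pos; [exact Hd1|]. apply Rdiv_lt_0_compat; lra. }
  intros y Hy Hyx.
  destruct (Req_EM_T y x) as [->|Hne].
  { rewrite Rminus_diag, Rabs_R0. lra. }
  assert (Hb : Rabs (y - x) < d1) by (pose proof (Rmin_l d1 (eps/Mx)); lra).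
  assert (Hb2 : Rabs (y - x) < eps / Mx) by (pose proof (Rmin_r d1 (eps/Mx)); lra).
  specialize (H y (proj2 (ballR _ _ _) Hb) (conj Hy Hne)).
  set (Q := (f y - f x) / (y - x)) in H.
  assert (H' : Rabs (Q - f' x) < 1) by exact H.
  assert (HQ : Rabs Q < Mx).
  { unfold Mx. pose proof (Rabs_triang_inv Q (f' x)). lra. }
  replace (f y - f x) with (Q * (y - x)) by (unfold Q; field; lra).
  rewrite Rabs_mult.
  assert (Hyx0 : 0 < Rabs (y - x)) by (apply Rabs_pos_lt; lra).
  apply Rle_lt_trans with (Mx * Rabs (y - x)).
  { apply Rmult_le_compat_r; [apply Rabs_pos|lra]. }
  apply Rmult_lt_compat_l with (r := Mx) in Hb2; [|exact HM].
  replace (Mx * (eps / Mx)) with eps in Hb2 by (field; lra). lra.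
Qed.

Definition cl (z : R) : R := if Rle_dec z 0 then 0 else if Rle_dec z 1 then z else 1.

Lemma cl_in z : in01 (cl z).
Proof. unfold cl, in01. destruct (Rle_dec z 0); [lra|]. destruct (Rle_dec z 1); lra. Qed.

Lemma cl_id z : in01 z -> cl z = z.
Proof. unfold cl, in01. intros. destruct (Rle_dec z 0); [lra|]. destruct (Rle_dec z 1); lra. Qed.

Lemma cl_lip z w : Rabs (cl w - cl z) <= Rabs (w - z).
Proof.
  unfold cl. destruct (Rle_dec w 0), (Rle_dec z 0); try destruct (Rle_dec w 1);
  try destruct (Rle_dec z 1);
  unfold Rabs; repeat destruct Rcase_abs; lra.
Qed.

Lemma cl_cont f f' : deriv_on01 f f' -> forall z, continuous (fun t => f (cl t)) z.
Proof.
  intros H z. unfold continuous. apply filterlim_locally. intros [eps He].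
  destruct (deriv_cont f f' H (cl z) (cl_in z) eps He) as [d [Hd Hf]].
  exists (mkposreal d Hd). intros w Hw.
  assert (Hw' : Rabs (w - z) < d) by exact Hw.
  change (Rabs (f (cl w) - f (cl z)) < eps). apply Hf; [apply cl_in|].
  pose proof (cl_lip z w). lra.
Qed.

Lemma ex_RInt01 f f' : deriv_on01 f f' -> forall x y, in01 x -> in01 y -> ex_RInt f x y.
Proof.
  intros H x y Hx Hy.
  apply ex_RInt_ext with (f := fun t => f (cl t)).
  - intros t Ht. rewrite cl_id; [reflexivity|].
    unfold in01 in *. unfold Rmin, Rmax in Ht.
    destruct (Rle_dec x y); lra.
  - apply (@ex_RInt_continuous R_CompleteNormedModule). intros z _. apply (cl_cont f f' H).
Qed.

Lemma Sphi_nonneg phi phi1 : deriv_on01 phi phi1 -> (forall x, in01 x -> 0 < phi x) ->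
  forall x y, in01 x -> in01 y -> 0 <= Sphi phi x y.
Proof.
  intros Hd Hp x y Hx Hy. unfold Sphi. destruct (Req_EM_T x y) as [E|Hne].
  { apply Rlt_le, Hp, Hx. }
  destruct (Rlt_or_le x y) as [Hlt|Hle].
  - apply Rmult_le_pos.
    + apply Rlt_le, Rinv_0_lt_compat. lra.
    + apply RInt_ge_0; [lra| apply (ex_RInt01 _ _ Hd); auto |].
      intros t Ht. apply Rlt_le, Hp. unfold in01 in *; lra.
  - assert (HI : 0 <= RInt phi y x).
    { apply RInt_ge_0; [lra| apply (ex_RInt01 _ _ Hd); auto |].
      intros t Ht. apply Rlt_le, Hp. unfold in01 in *; lra. }
    rewrite <- (opp_RInt_swap phi y x) by (apply (ex_RInt01 _ _ Hd); auto).
    change (opp (RInt phi y x)) with (- RInt phi y x).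
    assert (Hi : / (y - x) < 0) by (apply Rinv_lt_0_compat; lra).
    nra.
Qed.

Lemma pmu_id phi phi1 s : deriv_on01 phi phi1 -> (forall x, in01 x -> 0 < phi x) ->
  forall x y, in01 x -> in01 y ->
  rpow (Rabs (RInt phi x y)) s = rpow (Rabs (y - x)) s * rpow (Sphi phi x y) s.
Proof.
  intros Hd Hp x y Hx Hy.
  destruct (Req_EM_T x y) as [<-|Hne].
  - replace (RInt phi x x) with 0 by (rewrite RInt_point; reflexivity).
    rewrite Rminus_diag, Rabs_R0, rpow_0. ring.
  - replace (RInt phi x y) with ((y - x) * Sphi phi x y).
    2:{ unfold Sphi. destruct (Req_EM_T x y); [contradiction|]. field.
        intro E; apply Hne; lra. }
    rewrite Rabs_mult, (Rabs_pos_eq (Sphi phi x y)) by (apply (Sphi_nonneg phi phi1); auto).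
    apply rpow_mult; [apply Rabs_pos|apply (Sphi_nonneg phi phi1); auto].
Qed.

Theorem theorem5p1
  (c : R) (a a1 a2 b b1 b2 phi phi1 : R -> R) (s : R)
  (Hc : 0 < c < 1)
  (Ha1 : deriv_on01 a a1) (Ha2 : deriv_on01 a1 a2) (Ha2c : cont_on01 a2)
  (Hb1 : deriv_on01 b b1) (Hb2 : deriv_on01 b1 b2) (Hb2c : cont_on01 b2)
  (Ha_maps : forall x, in01 x -> 0 <= a x <= c)
  (Ha_inj : forall x y, in01 x -> in01 y -> a x = a y -> x = y)
  (Ha_surj : forall z, 0 <= z <= c -> exists x, in01 x /\ a x = z)
  (Hb_maps : forall x, in01 x -> c <= b x <= 1)
  (Hb_inj : forall x y, in01 x -> in01 y -> b x = b y -> x = y)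
  (Hb_surj : forall z, c <= z <= 1 -> exists x, in01 x /\ b x = z)
  (Ha_incr : forall x y, in01 x -> in01 y -> x < y -> a x < a y)
  (Hb_decr : forall x y, in01 x -> in01 y -> x < y -> b y < b x)
  (Ha0 : a 0 = 0) (Ha1' : a 1 = c) (Hb0 : b 0 = 1) (Hb1' : b 1 = c)
  (Ha1pos : forall x, in01 x -> 0 < a1 x)
  (Hb1neg : forall x, in01 x -> b1 x < 0)
  (Ha1lt1 : forall x, 0 < x <= 1 -> a1 x < 1)
  (Hb1gtm1 : forall x, 0 < x <= 1 -> -1 < b1 x)
  (Hphi1 : deriv_on01 phi phi1) (Hphi1c : cont_on01 phi1)
  (Hphipos : forall x, in01 x -> 0 < phi x)
  (Hprob : RInt phi 0 1 = 1)
  (Hs : 0 < s) :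
  forall N K : nat,
    lhs_coef a b phi s N K = rhs_coef a a1 b b1 phi s N K.
Proof.
  intros N K.
  assert (Hw : forall w x, in01 x -> in01 (hword a b w x)).
  { induction w as [|l w IH]; intros x Hx; [exact Hx|].
    simpl. specialize (IH x Hx). destruct l; simpl.
    - pose proof (Hb_maps _ IH). unfold in01; lra.
    - pose proof (Ha_maps _ IH). unfold in01; lra. }
  assert (H01 : in01 0) by (unfold in01; lra).
  assert (H11 : in01 1) by (unfold in01; lra).
  transitivity (BB a b phi s 0 1 N K).
  - unfold lhs_coef, BB, sumW. f_equal. apply map_ext. intro w.
    destruct (Nat.eqb (nones w) K); [|reflexivity].
    unfold p_mu, Phi. apply (pmu_id phi phi1); auto.
  - rewrite (BB_DD a a1 b b1). unfold DD, rhs_coef. apply sum_eq. intros n Hn.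
    unfold CC.
    assert (Hz : Nat.iter n a 0 = 0).
    { induction n; simpl; [reflexivity|]. rewrite IHn by lia. exact Ha0. }
    assert (Hq : in01 (Nat.iter n a 1)).
    { clear Hn Hz. induction n; simpl; [exact H11|]. pose proof (Ha_maps _ IHn). unfold in01; lra. }
    rewrite Hz. unfold q. rewrite Rminus_0_r, Rabs_pos_eq by (unfold in01 in Hq; lra).
    reflexivity.
Qed.
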